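(* Fix $s,b\ge1$, let $\{a_i\}$ be the $(s,b)$-Generacci sequence, and for $n,k\ge0$ let $q_{n,k}$ be the number of $m\in[0,a_{nb+1})$ whose legal decomposition has exactly $k$ summands (so $q_{n,0}=1$, $q_{n,1}=nb$, and $q_{n,k}=0$ if $n<s+1$ and $k\ge2$). If $n\ge s+1$ and $k\le\frac{n+s}{s+1}$ then \[q_{n,k}=b\,q_{n-(s+1),k-1}+q_{n-1,k},\] and if $k>\frac{n+s}{s+1}$ then $q_{n,k}=0$. Moreover, with $n_*=\lceil\frac{n+s}{s+1}\rceil$, the generating function $H(x,y)=\sum_{n\ge0}\sum_{k=0}^{n_*}q_{n,k}x^ny^k$ satisfies \[H(x,y)=\frac{1+by(x+x^2+\dots+x^s)}{1-x-byx^{s+1}}.\]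
   Context: Fix integers $s,b\ge1$. For an increasing sequence of positive integers $\{a_i\}_{i\ge1}$ define bins $\mathcal{B}_n=\{a_{b(n-1)+1},\dots,a_{bn}\}$ for $n\ge1$, $\mathcal{B}_j=\emptyset$ for $j\le 0$. A decomposition $m=a_{\ell_1}+\dots+a_{\ell_k}$ with $a_{\ell_1}>\dots>a_{\ell_k}$ is an $(s,b)$-Generacci legal decomposition if $\{a_{\ell_i},a_{\ell_{i+1}}\}\not\subset\mathcal{B}_{j-s}\cup\dots\cup\mathcal{B}_j$ for all $i,j$. The $(s,b)$-Generacci sequence is the increasing sequence in which each $a_i$ is the smallest positive integer with no legal decomposition using $a_1,\dots,a_{i-1}$; every nonnegative integer has a unique legal decomposition ($0$ being the empty sum). *)

(* Defs.v *)
From mathcomp Require Import all_boot all_algebra.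
From mathcomp Require Import boolp.
Set Implicit Arguments. Unset Strict Implicit. Unset Printing Implicit Defensive.
Import GRing.Theory.

(* Sequences a : nat -> nat are indexed from 1 (the value a 0 is irrelevant). *)

(* bin number of index l >= 1: a_l lies in B_(bin b l) *)
Definition bin (b l : nat) : nat := (l - 1) %/ b + 1.

(* a_l lies in B_(j-s) U ... U B_j  (bins with index <= 0 are empty) *)
Definition in_window (s b j l : nat) : Prop := j - s <= bin b l <= j.

(* L = [:: l_1; ...; l_k] is the index list of a decomposition
   a_(l_1) + ... + a_(l_k) with a_(l_1) > ... > a_(l_k), and it is legal:
   no two consecutive summands lie in a window of s+1 consecutive bins. *)
Definition legal (s b : nat) (a : nat -> nat) (L : seq nat) : Prop :=
  all (fun l => 0 < l) L /\
  sorted (fun x y => a y < a x) L /\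
  (forall i, i.+1 < size L -> forall j : nat,
      ~ (in_window s b j (nth 0 L i) /\ in_window s b j (nth 0 L i.+1))).

Definition has_legal_dec_upto (s b : nat) (a : nat -> nat) (N m : nat) : Prop :=
  exists L : seq nat, all (fun l => l <= N) L /\ legal s b a L /\
    \sum_(l <- L) a l = m.

Definition is_generacci (s b : nat) (a : nat -> nat) : Prop :=
  (forall i, 0 < i -> a i < a i.+1) /\
  (forall i, 0 < i ->
     [/\ 0 < a i,
         ~ has_legal_dec_upto s b a i.-1 (a i)
       & forall m, 0 < m < a i -> has_legal_dec_upto s b a i.-1 m]).

Definition dec_with_k (s b : nat) (a : nat -> nat) (m k : nat) : Prop :=
  exists L : seq nat, legal s b a L /\ \sum_(l <- L) a l = m /\ size L = k.

Definition q (s b : nat) (a : nat -> nat) (n k : nat) : nat :=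
  count (fun m => `[< dec_with_k s b a m k >]) (iota 0 (a (n * b + 1))).

(* n_* = ceil((n+s)/(s+1)) *)
Definition nstar (s n : nat) : nat := (n + s + s) %/ s.+1.

(* Bivariate formal power series over int: F n k = coefficient of x^n y^k. *)
Definition fps := nat -> nat -> int.
Local Open Scope ring_scope.
Definition fps_const (c : int) : fps := fun n k => if (n == 0)%N && (k == 0)%N then c else 0.
Definition fps_X : fps := fun n k => if (n == 1)%N && (k == 0)%N then 1 else 0.
Definition fps_Y : fps := fun n k => if (n == 0)%N && (k == 1)%N then 1 else 0.
Definition fps_add (F G : fps) : fps := fun n k => F n k + G n k.
Definition fps_opp (F : fps) : fps := fun n k => - F n k.
Definition fps_mul (F G : fps) : fps := fun n k =>
  \sum_(i < n.+1) \sum_(j < k.+1) F i j * G (n - i)%N (k - j)%N.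
Definition fps_pow (F : fps) (e : nat) : fps := iter e (fps_mul F) (fps_const 1).

Definition gfH (s b : nat) (a : nat -> nat) : fps := fun n k =>
  if (k <= nstar s n)%N then (q s b a n k)%:Z else 0.

Definition gf_den (s b : nat) : fps :=
  fps_add (fps_add (fps_const 1) (fps_opp fps_X))
          (fps_opp (fps_mul (fps_const b%:Z) (fps_mul fps_Y (fps_pow fps_X s.+1)))).

Definition gf_num (s b : nat) : fps :=
  fps_add (fps_const 1)
    (fps_mul (fps_const b%:Z)
       (fps_mul fps_Y (foldr fps_add (fps_const 0) [seq fps_pow fps_X i | i <- iota 1 s]))).

(* Main.v *)
Require Import Defs.
From mathcomp Require Import all_boot all_algebra.
From mathcomp Require Import zify boolp.
Set Implicit Arguments. Unset Strict Implicit. Unset Printing Implicit Defensive.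

Definition fl (s b l : nat) := ((bin b l - s.+1) * b)%N.

Lemma bin_le (b h c : nat) : 0 < b -> 0 < h -> (bin b h <= c) = (h <= c * b).
Proof.
move=> b0 h0; rewrite /bin addn1 ltn_divLR //; case: h h0 => // h _.
by rewrite subn1.
Qed.

Lemma bin_mono (b h l : nat) : h <= l -> bin b h <= bin b l.
Proof. by move=> hl; rewrite /bin leq_add2r leq_div2r // leq_sub2r. Qed.

Lemma a_lt (a : nat -> nat) : (forall i, 0 < i -> a i < a i.+1) ->
  forall i j, 0 < i -> i < j -> a i < a j.
Proof.
move=> ha i j i0; elim: j => // j IH; rewrite ltnS leq_eqVlt => /orP [/eqP <-|ij].
  exact: ha.
apply: ltn_trans (IH ij) (ha _ _); lia.
Qed.

Lemma a_ltE (a : nat -> nat) : (forall i, 0 < i -> a i < a i.+1) ->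
  forall i j, 0 < i -> 0 < j -> (a i < a j) = (i < j).
Proof.
move=> ha i j i0 j0; case: (ltnP i j) => ij; first exact: a_lt.
apply/negbTE; rewrite -leqNgt; move: ij; rewrite leq_eqVlt => /orP [/eqP ->//|ji].
exact/ltnW/a_lt.
Qed.

Lemma pair_ok (s b : nat) (a : nat -> nat) : 0 < b -> (forall i, 0 < i -> a i < a i.+1) ->
  forall h l, 0 < h -> 0 < l ->
  (h <= fl s b l) <-> (a h < a l /\ forall j, ~ (in_window s b j l /\ in_window s b j h)).
Proof.
move=> b0 ha h l h0 l0; rewrite /fl -bin_le //; split.
  move=> hb; have bl : bin b h < bin b l.
    have : 0 < bin b h by rewrite /bin addn1.
    lia.
  split.
    rewrite a_ltE //; rewrite ltnNge; apply/negP => /(bin_mono b); lia.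
  move=> j []; rewrite /in_window => /andP [w1 w2] /andP [w3 w4].
  have : 0 < bin b h by rewrite /bin addn1.
  lia.
rewrite a_ltE // => -[hl nw]; have bhl := bin_mono b (ltnW hl).
case: (leqP (bin b l - s) (bin b h)) => c; last lia.
exfalso; apply: (nw (bin b l)); rewrite /in_window leqnn c bhl; split => //.
by rewrite leq_subr.
Qed.

Lemma legal_nil s b a : legal s b a [::].
Proof. by split=> //; split=> // i. Qed.

Lemma legal_cons (s b : nat) (a : nat -> nat) l T : 0 < b ->
  (forall i, 0 < i -> a i < a i.+1) ->
  legal s b a (l :: T) <-> [/\ 0 < l, legal s b a T & all (fun h => h <= fl s b l) T].
Proof.
move=> b0 ha; split.
  case=> /= /andP [l0 pT] [sT wT].
  have sT' : sorted (fun x y => a y < a x) T := path_sorted sT.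
  split=> //.
    split=> //; split=> // i Hi j; exact: (wT i.+1 Hi j).
  case: T pT sT wT sT' => //= h T' /andP [h0 pT'] /andP [ahl pT2] wT _.
  have hf : h <= fl s b l.
    apply/(pair_ok s b0 ha h0 l0); split=> // j; exact: (wT 0 erefl j).
  rewrite hf /=.
  have := order_path_min (fun y x z (H1 : a y < a x) (H2 : a z < a y) => ltn_trans H2 H1) pT2.
  move=> /allP Hm; apply/allP => y yT; have := Hm y yT; have := allP pT' y yT => /= y0.
  rewrite a_ltE // => yh; exact: leq_trans (ltnW yh) hf.
case=> l0 [pT [sT wT]] hT; split; first by rewrite /= l0.
split.
  case: T pT sT wT hT => //= h T' pT sT wT /andP [hf _].
  rewrite sT andbT; case/andP: pT => h0 _.
  by have [] := (pair_ok s b0 ha h0 l0).1 hf.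
case=> [|i] /= Hi j; last exact: wT.
case: T pT sT wT hT Hi => //= h T' /andP [h0 _] _ _ /andP [hf _] _.
by have [] := (pair_ok s b0 ha h0 l0).1 hf.
Qed.

Lemma fl_lt s b l : 0 < b -> 0 < l -> fl s b l < l.
Proof.
move=> b0 l0; rewrite ltnNge -bin_le //.
have : 0 < bin b l by rewrite /bin addn1.
lia.
Qed.

Lemma surj s b a i m : is_generacci s b a -> 0 < i -> m < a i ->
  exists L, [/\ all (fun l => l <= i.-1) L, legal s b a L & \sum_(l <- L) a l = m].
Proof.
case=> _ G i0 mi; case: m mi => [|m] mi.
  by exists [::]; rewrite big_nil; split=> //; exact: legal_nil.
have [_ _ H] := G i i0; have [L [H1 [H2 H3]]] := H m.+1 mi.
by exists L.
Qed.

Lemma main_ind s b a : 0 < b -> is_generacci s b a -> forall N,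
  (forall L, all (fun l => l <= N) L -> legal s b a L -> \sum_(l <- L) a l < a N.+1) /\
  (0 < N -> a N.+1 = a N + a (fl s b N).+1).
Proof.
move=> b0 G; have ha := G.1; have apos : forall i, 0 < i -> 0 < a i.
  by move=> i i0; have [] := G.2 i i0.
elim/ltn_ind => N IH.
case: N IH => [|N'] IH.
  split=> // -[|l L] /=; first by rewrite big_nil => _ _; exact: apos.
  by move=> /andP [l0 _] [/= /andP [lp _] _]; lia.
set N := N'.+1.
have fN : fl s b N < N by apply: fl_lt.
set M := a N + a (fl s b N).+1.
have img : forall L, all (fun l => l <= N) L -> legal s b a L -> \sum_(l <- L) a l < M.
  case=> [|l T] /=; first by rewrite big_nil /M; have := apos N erefl; lia.
  move=> /andP [lN TN] leg; rewrite big_cons.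
  have [l0 legT allT] := (@legal_cons s b a l T b0 ha).1 leg.
  move: lN; rewrite leq_eqVlt => /orP [/eqP lE|lN].
    rewrite lE in allT *; have := (IH _ fN).1 T allT legT; rewrite /M; lia.
  have := (IH N' (ltnSn _)).1 (l :: T) _ leg.
  rewrite big_cons /M => H; have : a l + \sum_(l <- T) a l < a N.
    apply: H => /=; rewrite -ltnS lN /=; apply/allP => y yT.
    have := allP allT y yT; have := fl_lt s b0 l0; lia.
  lia.
have sur : forall m, m < M -> exists L, [/\ all (fun l => l <= N) L, legal s b a L &
                                            \sum_(l <- L) a l = m].
  move=> m mM; case: (ltnP m (a N)) => mN.
    have [L [H1 H2 H3]] := surj G (erefl : 0 < N) mN.
    exists L; split=> //; apply: sub_all H1 => y /=; lia.
  have mlt : m - a N < a (fl s b N).+1 by rewrite /M in mM; lia.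
  have [T [H1 H2 H3]] := surj G (erefl : 0 < (fl s b N).+1) mlt.
  exists (N :: T); split.
  - rewrite /= leqnn /=; apply: sub_all H1 => y /=; lia.
  - by apply/(@legal_cons s b a N T b0 ha); split.
  - rewrite big_cons H3; lia.
have eqM : a N.+1 = M.
  have [Npos Nnot Nall] := G.2 N.+1 erefl.
  case: (ltngtP (a N.+1) M) => // c.
    exfalso; apply: Nnot; have [L [H1 H2 H3]] := sur _ c; exists L; split=> //.
  have MM : 0 < M < a N.+1 by rewrite c andbT /M; have := apos N erefl; lia.
  exfalso; have [L [H1 [H2 H3]]] := Nall M MM.
  have := img L H1 H2; lia.
split=> // L H1 H2; rewrite eqM; exact: img.
Qed.

Lemma sum_ge (a : nat -> nat) (L : seq nat) l : l \in L -> a l <= \sum_(x <- L) a x.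
Proof.
elim: L => //= x L IH; rewrite in_cons big_cons => /orP [/eqP ->|/IH]; lia.
Qed.

Lemma in_range s b a N L : is_generacci s b a -> legal s b a L ->
  \sum_(l <- L) a l < a N.+1 -> all (fun l => l <= N) L.
Proof.
move=> G [pL _] sL; apply/allP => l lL; have l0 := allP pL l lL.
have := sum_ge a lL; rewrite -ltnS => /(fun h => leq_ltn_trans h sL).
by rewrite (a_ltE G.1) // ltnS.
Qed.

Lemma dec_char s b a N m' k : 0 < b -> is_generacci s b a -> 0 < N ->
  m' < a (fl s b N).+1 ->
  dec_with_k s b a (a N + m') k <-> (exists k', k = k'.+1 /\ dec_with_k s b a m' k').
Proof.
move=> b0 G N0 mlt; have ha := G.1.
have [_ recN] := main_ind b0 G N; have := recN N0 => {}recN.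
have apos : forall i, 0 < i -> 0 < a i by move=> i i0; have [] := G.2 i i0.
split.
  case=> L [leg [sL kL]].
  have allN : all (fun l => l <= N) L.
    by apply: (@in_range s b a N L G leg); rewrite sL recN ltn_add2l.
  case: L leg sL kL allN => [|l T] leg sL kL allN.
    by move: sL; rewrite big_nil; have := apos N N0; lia.
  have [l0 legT allT] := (@legal_cons s b a l T b0 ha).1 leg.
  move: allN => /= /andP [lN _].
  case: (ltnP l N) => lN'.
    exfalso; have [H _] := main_ind b0 G N.-1.
    have : \sum_(x <- l :: T) a x < a N.-1.+1.
      apply: H leg.
      rewrite /= -ltnS prednK // lN' /=; apply: sub_all allT => y /=.
      have := fl_lt s b0 l0; lia.
    rewrite sL prednK //; lia.
  have lE : l = N by lia.
  subst l; exists (size T); split; first by rewrite -kL.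
  exists T; split=> //; split=> //; move: sL; rewrite big_cons; lia.
case=> k' [-> [T [legT [sT kT]]]].
have allT : all (fun l => l <= fl s b N) T.
  by apply: (@in_range s b a _ T G legT); rewrite sT.
exists (N :: T); split; first by apply/(@legal_cons s b a N T b0 ha).
by rewrite big_cons sT /= kT.
Qed.

Definition cnt s b a N k := count (fun m => `[< dec_with_k s b a m k >]) (iota 0 (a N.+1)).

Lemma cnt_rec s b a N k : 0 < b -> is_generacci s b a -> 0 < N ->
  cnt s b a N k = cnt s b a N.-1 k + (if k is k'.+1 then cnt s b a (fl s b N) k' else 0).
Proof.
move=> b0 G N0; have [_ recN] := main_ind b0 G N; have := recN N0 => {}recN.
rewrite /cnt recN iotaD count_cat prednK //; congr (_ + _).
rewrite add0n -[a N]addn0 iotaDl count_map.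
case: k => [|k'].
  rewrite (@eq_in_count _ _ pred0) ?count_pred0 // => m.
  rewrite mem_iota add0n => /= mlt; rewrite /preim /=.
  apply/asboolP => /(dec_char _ b0 G N0 mlt) [k'] [].
  done.
apply: eq_in_count => m; rewrite mem_iota add0n => /= mlt; rewrite /preim /=.
apply: asbool_equiv_eq; rewrite (dec_char _ b0 G N0 mlt); split.
  by case=> k'' [[->]].
by move=> H; exists k'.
Qed.

Lemma a1 s b a : is_generacci s b a -> a 1 = 1.
Proof.
move=> G; have [p1 _ H] := G.2 1 erefl.
case: (ltngtP (a 1) 1) => // c; first lia.
have h01 : 0 < 1 < a 1 by rewrite c.
have [L [HL [legL sL]]] := H 1 h01.
case: L HL legL sL => [|l L] /=; first by rewrite big_nil.
by case=> /andP [lz _] [/= /andP [lp _] _]; lia.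
Qed.

Lemma cnt0 s b a k : is_generacci s b a -> cnt s b a 0 k = (k == 0).
Proof.
move=> G; rewrite /cnt (a1 G) /= addn0.
have apos : forall i, 0 < i -> 0 < a i by move=> i i0; have [] := G.2 i i0.
case: k => [|k] /=.
  suff -> : `[< dec_with_k s b a 0 0 >] = true by [].
  by apply/asboolP; exists [::]; rewrite big_nil; split=> //; exact: legal_nil.
suff -> : `[< dec_with_k s b a 0 k.+1 >] = false by [].
apply/asboolP => -[L [[pL _] [sL kL]]]; case: L pL sL kL => // l L /= /andP [l0 _] sL _.
by move: sL; rewrite big_cons; have := apos l l0; lia.
Qed.

Lemma qE s b a n k : q s b a n k = cnt s b a (n * b) k.
Proof. by rewrite /q /cnt addn1. Qed.

Lemma fl_block s b n j : 0 < b -> j < b -> fl s b (n * b + j.+1) = (n.+1 - s.+1) * b.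
Proof.
move=> b0 jb; rewrite /fl /bin addn1 (addnS (n * b) j) subn1 /= divnMDl // divn_small // addn0.
by [].
Qed.

Lemma cnt_block s b a n k j : 0 < b -> is_generacci s b a -> j <= b ->
  cnt s b a (n * b + j) k =
  cnt s b a (n * b) k + j * (if k is k'.+1 then cnt s b a ((n.+1 - s.+1) * b) k' else 0).
Proof.
move=> b0 G; elim: j => [|j IH] jb; first by rewrite addn0 mul0n addn0.
rewrite cnt_rec // ?addnS //= -addnS fl_block // IH ?(ltnW jb) //.
case: k {IH} => [|k]; rewrite ?muln0 ?addn0 //; lia.
Qed.

Lemma q_rec s b a n k : 0 < b -> is_generacci s b a -> 0 < n ->
  q s b a n k = (if k is k'.+1 then b * q s b a (n - s.+1) k' else 0) + q s b a n.-1 k.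
Proof.
move=> b0 G; case: n => // n _.
rewrite !qE /= mulSn addnC (cnt_block _ _ b0 G (leqnn b)).
case: k => [|k]; rewrite ?muln0 ?addn0 //; rewrite qE; lia.
Qed.

Lemma q0 s b a k : is_generacci s b a -> q s b a 0 k = (k == 0).
Proof. by move=> G; rewrite qE mul0n cnt0. Qed.

Lemma qk0 s b a n : 0 < b -> is_generacci s b a -> q s b a n 0 = 1.
Proof.
move=> b0 G; elim: n => [|n IH]; first by rewrite q0.
by rewrite q_rec.
Qed.

Lemma qk1 s b a n : 0 < b -> is_generacci s b a -> q s b a n 1 = n * b.
Proof.
move=> b0 G; elim: n => [|n IH]; first by rewrite q0.
rewrite q_rec //= IH qk0 //; lia.
Qed.

Lemma qsmall s b a n k : 0 < b -> is_generacci s b a -> n < s.+1 -> 2 <= k ->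
  q s b a n k = 0.
Proof.
move=> b0 G; elim: n => [|n IH] ns k2; first by rewrite q0 //; case: k k2.
rewrite q_rec //= IH ?(ltnW ns) //.
case: k k2 {IH} => [|k] // k2; rewrite (_ : n.+1 - s.+1 = 0); last lia.
by rewrite q0 //; case: k k2 => [|k] //= _; rewrite muln0.
Qed.

Lemma qbig s b a n k : 0 < b -> is_generacci s b a -> n + s < k * s.+1 ->
  q s b a n k = 0.
Proof.
move=> b0 G; elim/ltn_ind: n k => n IH k H.
case: n IH H => [|n] IH H.
  by rewrite q0 //; case: k H.
rewrite q_rec //=.
rewrite IH //; last lia.
case: k H => [|k] H; first by [].
have h1 : n.+1 - s.+1 + s < k * s.+1.
  move: H; rewrite mulSn; case: k => [|k]; first lia.
  rewrite mulSn; lia.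
by rewrite (IH _ _ _ h1) ?muln0 //; lia.
Qed.

Import GRing.Theory.
Local Open Scope ring_scope.

Lemma sum_pick (n i0 : nat) (F : nat -> int) :
  \sum_(i < n.+1) (if (i : nat) == i0 then F i else 0) = if (i0 <= n)%N then F i0 else 0.
Proof.
elim: n => [|n IH]; first by rewrite big_ord_recr big_ord0 /= add0r; case: i0.
rewrite big_ord_recr /= IH.
have [c|c] := leqP i0 n.
- rewrite (leq_trans c (leqnSn n)) (_ : (n.+1 == i0) = false) ?addr0 //; apply/eqP; lia.
- case: (eqVneq n.+1 i0) => [<-|ne]; first by rewrite leqnn add0r.
  rewrite (_ : (i0 <= n.+1)%N = false) ?addr0 //; apply/negbTE; rewrite -ltnNge.
  move/eqP: ne; lia.
Qed.

Lemma mul_mono (F G : fps) n k i0 j0 c :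
  (forall i j, F i j = if (i == i0) && (j == j0) then c else 0) ->
  fps_mul F G n k = if (i0 <= n)%N && (j0 <= k)%N then c * G (n - i0)%N (k - j0)%N else 0.
Proof.
move=> HF; rewrite /fps_mul.
have step : forall i : 'I_n.+1,
   \sum_(j < k.+1) F i j * G (n - i)%N (k - j)%N =
   if (i : nat) == i0 then (if (j0 <= k)%N then c * G (n - i)%N (k - j0)%N else 0) else 0.
  move=> i; case: (eqVneq (i : nat) i0) => e.
    rewrite -(sum_pick k j0 (fun j => c * G (n - i)%N (k - j)%N)).
    by apply: eq_bigr => j _; rewrite HF e eqxx /=; case: eqP => [->|]; rewrite ?mul0r.
  by rewrite big1 // => j _; rewrite HF (negbTE e) mul0r.
rewrite (eq_bigr _ (fun i _ => step i)).
rewrite (sum_pick n i0 (fun i => if (j0 <= k)%N then c * G (n - i)%N (k - j0)%N else 0)).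
by case: (i0 <= n)%N; case: (j0 <= k)%N.
Qed.

Lemma mul_add (F1 F2 G : fps) n k :
  fps_mul (fps_add F1 F2) G n k = fps_mul F1 G n k + fps_mul F2 G n k.
Proof.
rewrite /fps_mul -big_split; apply: eq_bigr => i _; rewrite -big_split.
by apply: eq_bigr => j _; rewrite /fps_add mulrDl.
Qed.

Lemma mul_opp (F G : fps) n k : fps_mul (fps_opp F) G n k = - fps_mul F G n k.
Proof.
rewrite /fps_mul -sumrN; apply: eq_bigr => i _; rewrite -sumrN.
by apply: eq_bigr => j _; rewrite /fps_opp mulNr.
Qed.

Lemma pow_X e i j : fps_pow fps_X e i j = if (i == e) && (j == 0%N) then 1 else 0.
Proof.
elim: e i j => [|e IH] i j; first by [].
rewrite /fps_pow iterS -/(fps_pow fps_X e).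
rewrite (mul_mono _ _ _ (i0:=1%N) (j0:=0%N) (c:=1)) //.
rewrite IH subn0 mul1r /=.
case: i => [|i] //=.
by rewrite subn1 /= eqSS.
Qed.

Lemma const_mul c (G : fps) i j : fps_mul (fps_const c) G i j = c * G i j.
Proof.
by rewrite (mul_mono _ _ _ (i0:=0%N) (j0:=0%N) (c:=c)) // !subn0.
Qed.

Lemma Y_mul (G : fps) i j : fps_mul fps_Y G i j = if (1 <= j)%N then G i (j - 1)%N else 0.
Proof.
by rewrite (mul_mono _ _ _ (i0:=0%N) (j0:=1%N) (c:=1)) // subn0 mul1r.
Qed.

Lemma M_pt s b i j :
  fps_mul (fps_const b%:Z) (fps_mul fps_Y (fps_pow fps_X s.+1)) i j =
  if (i == s.+1) && (j == 1%N) then b%:Z else 0.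
Proof.
rewrite const_mul Y_mul pow_X.
case: j => [|j] //=; first by rewrite mulr0 andbF.
rewrite subn1 /=; case: (i == s.+1) => //=; case: j => //=; rewrite ?mulr1 ?mulr0 //.
Qed.

Lemma fold_pt m t i j :
  foldr fps_add (fps_const 0) [seq fps_pow fps_X l | l <- iota m t] i j =
  if (j == 0%N) && (m <= i < m + t)%N then 1 else 0.
Proof.
elim: t m => [|t IH] m /=.
  rewrite /fps_const addn0 (_ : (m <= i < m)%N = false) ?andbF; first by case: (_ && _).
  by apply/negP => /andP [h1 h2]; lia.
rewrite /fps_add IH pow_X.
case: (j == 0%N); rewrite ?andbF ?andbT ?addr0 //=.
have E1 : (m.+1 <= i < m.+1 + t)%N = (m <= i < m + t.+1)%N && (i != m).
  by apply/idP/idP; case: (eqVneq i m) => e; rewrite ?andbT ?andbF /=; lia.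
rewrite E1; case: (eqVneq i m) => [->|ne]; rewrite ?andbF ?andbT ?addr0 ?add0r //.
by rewrite leqnn addnS ltnS leq_addr.
Qed.

Lemma X_mul (G : fps) i j : fps_mul fps_X G i j = if (1 <= i)%N then G (i - 1)%N j else 0.
Proof.
by rewrite (mul_mono _ _ _ (i0:=1%N) (j0:=0%N) (c:=1)) // leq0n andbT subn0 mul1r.
Qed.

Lemma M_mul s b (G : fps) i j :
  fps_mul (fps_mul (fps_const b%:Z) (fps_mul fps_Y (fps_pow fps_X s.+1))) G i j =
  if (s.+1 <= i)%N && (1 <= j)%N then b%:Z * G (i - s.+1)%N (j - 1)%N else 0.
Proof. by rewrite (mul_mono _ _ _ (i0:=s.+1) (j0:=1%N) (c:=b%:Z)) // => i1 j1; rewrite M_pt. Qed.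

Lemma gfH_q s b a n k : (0 < b)%N -> is_generacci s b a -> gfH s b a n k = (q s b a n k)%:Z.
Proof.
move=> b0 G; rewrite /gfH; case: leqP => // c.
rewrite qbig //; move: c; rewrite /nstar ltn_divLR //; lia.
Qed.

Lemma gf_eq s b a : (0 < b)%N -> is_generacci s b a ->
  fps_mul (gf_den s b) (gfH s b a) = gf_num s b.
Proof.
move=> b0 G; apply/funext => n; apply/funext => k.
rewrite /gf_den !mul_add !mul_opp const_mul X_mul M_mul mul1r.
rewrite /gf_num /fps_add const_mul Y_mul fold_pt /fps_const !gfH_q //.
case: n => [|n].
  rewrite q0 //=; case: k => [|k] //=.
    by rewrite mulr0 addr0.
  by rewrite andbF mulr0 !subr0.
have hq := @q_rec s b a n.+1 k b0 G (ltn0Sn n).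
rewrite hq subn1 /=.
case: k {hq} => [|k] /=.
  by rewrite add0n subrr ltnn andbF subr0 mulr0 addr0.
rewrite PoszD PoszM addrK subn1 /= ltn0Sn andbT add0r.
case: (leqP s.+1 n.+1) => c /=.
  by rewrite andbF mulr0 subrr.
rewrite subr0 andbT (_ : (n.+1 - s.+1)%N = 0%N); last lia.
by rewrite q0 //; case: k => [|k] /=; rewrite ?mulr0 ?mulr1.
Qed.

Local Close Scope ring_scope.

Theorem propositionA1 (s b : nat) (a : nat -> nat) :
  (1 <= s)%N -> (1 <= b)%N -> is_generacci s b a ->
  (forall n, q s b a n 0 = 1%N) /\
      (forall n, q s b a n 1 = (n * b)%N) /\
      (forall n k, (n < s.+1)%N -> (2 <= k)%N -> q s b a n k = 0%N) /\
      (forall n k, (s.+1 <= n)%N -> (k * s.+1 <= n + s)%N ->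
         q s b a n k =
           ((if k is k'.+1 then b * q s b a (n - s.+1) k' else 0)
            + q s b a n.-1 k)%N) /\
      (forall n k, (n + s < k * s.+1)%N -> q s b a n k = 0%N) /\
    fps_mul (gf_den s b) (gfH s b a) = gf_num s b.
Proof.
move=> s1 b0 G; split; first by move=> n; exact: qk0.
split; first by move=> n; exact: qk1.
split; first by move=> n k; exact: qsmall.
split; first by move=> n k ns _; apply: q_rec => //; lia.
split; first by move=> n k; exact: qbig.
exact: gf_eq.
Qed.
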